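(* Let $\mathcal{H}$ be a complex Hilbert space, let $A\in\mathcal{B}(\mathcal{H})$ be a nonzero positive operator, and let $\mathbb{A}=\begin{pmatrix}A&O\\O&A\end{pmatrix}$ on $\mathcal{H}\oplus\mathcal{H}$. Let $P,Q\in\mathcal{B}_A(\mathcal{H})$. Then $$\omega_{\mathbb{A}}\left[\begin{pmatrix}P&Q\\O&O\end{pmatrix}\right]\geq\frac12\max\{\omega_A(P+iQ),\omega_A(P-iQ)\}.$$
   Context: For a positive operator $A$ on $\mathcal{H}$, $\langle x,y\rangle_A:=\langle Ax,y\rangle$ and $\|x\|_A:=\sqrt{\langle x,x\rangle_A}$. $\mathcal{B}_A(\mathcal{H})$ is the set of $T\in\mathcal{B}(\mathcal{H})$ with $\mathcal{R}(T^*A)\subseteq\mathcal{R}(A)$. $\omega_A(T):=\sup\{|\langle Tx,x\rangle_A|:x\in\mathcal{H},\|x\|_A=1\}$. $\omega_{\mathbb{A}}$ is defined analogously on $\mathcal{H}\oplus\mathcal{H}$ with $\langle (x_1,x_2),(y_1,y_2)\rangle_{\mathbb{A}}=\langle x_1,y_1\rangle_A+\langle x_2,y_2\rangle_A$. *)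

(* Defs.v *)
From mathcomp Require Import all_boot all_order all_algebra.
From mathcomp Require Import all_classical all_reals ereal.
From mathcomp.real_closed Require Export complex.
Export Order.TTheory GRing.Theory Num.Theory.

Set Implicit Arguments.
Unset Strict Implicit.
Unset Printing Implicit Defensive.

Local Open Scope ring_scope.
Local Open Scope classical_set_scope.
Local Open Scope ereal_scope.
Local Open Scope ring_scope.

Section HilbertDefs.
Variable R : realType.
Local Notation C := R[i].

Definition ipnorm (W : Type) (ip : W -> W -> C) (x : W) : R :=
  Num.sqrt (complex.Re (ip x x)).

Variable V : lmodType C.
Variable ip : V -> V -> C.

Definition is_hilbert : Prop :=
  [/\ (forall (a : C) (x y z : V), ip (a *: x + y) z = a * ip x z + ip y z),
      (forall x y : V, ip y x = (ip x y)^*),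
      (forall x : V, 0 <= ip x x),
      (forall x : V, ip x x = 0 -> x = 0) &
      (forall u : nat -> V,
          (forall eps : R, 0 < eps -> exists N : nat, forall m n : nat,
              (N <= m)%N -> (N <= n)%N -> ipnorm ip (u m - u n) < eps) ->
          exists l : V, forall eps : R, 0 < eps -> exists N : nat,
              forall n : nat, (N <= n)%N -> ipnorm ip (u n - l) < eps)].

Definition is_bounded_op (T : V -> V) : Prop :=
  linear T /\ exists M : R, forall x, ipnorm ip (T x) <= M * ipnorm ip x.

Definition is_adjoint (T S : V -> V) : Prop :=
  forall x y, ip (T x) y = ip x (S y).

Definition is_positive_op (A : V -> V) : Prop :=
  is_bounded_op A /\ forall x, 0 <= ip (A x) x.

(* T \in B_A(H): T in B(H) and R(T^* A) \subseteq R(A). *)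
Definition in_BA (A T : V -> V) : Prop :=
  is_bounded_op T /\
  exists S : V -> V, [/\ is_bounded_op S, is_adjoint T S &
                         forall x, exists y, S (A x) = A y].

End HilbertDefs.

Definition sradius (R : realType) (W : Type) (sip : W -> W -> R[i]) (T : W -> W)
  : \bar R :=
  ereal_sup [set ((complex.Re `|sip (T x) x|)%:E) | x in [set x | ipnorm sip x = 1]].

Definition ipA (R : realType) (V : lmodType R[i]) (ip : V -> V -> R[i])
  (A : V -> V) : V -> V -> R[i] := fun x y => ip (A x) y.

Definition omegaA (R : realType) (V : lmodType R[i]) (ip : V -> V -> R[i])
  (A T : V -> V) : \bar R := sradius (ipA ip A) T.

Definition ipAA (R : realType) (V : lmodType R[i]) (ip : V -> V -> R[i])
  (A : V -> V) : V * V -> V * V -> R[i] :=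
  fun u v => ipA ip A u.1 v.1 + ipA ip A u.2 v.2.

Definition omegaAA (R : realType) (V : lmodType R[i]) (ip : V -> V -> R[i])
  (A : V -> V) (T : V * V -> V * V) : \bar R := sradius (ipAA ip A) T.

Definition blk_PQ00 (R : realType) (V : lmodType R[i]) (P Q : V -> V)
  : V * V -> V * V := fun u => (P u.1 + Q u.2, 0).

(* Main.v *)
Require Import Defs.
From mathcomp Require Import all_boot all_order all_algebra.
From mathcomp Require Import all_classical all_reals ereal.
From mathcomp.real_closed Require Import complex.
From mathcomp Require Import ring lra.
Import Order.TTheory GRing.Theory Num.Theory.
Local Open Scope ring_scope.

Section Core.
Variable R : realType.
Variable V : lmodType R[i].
Variable ip : V -> V -> R[i].
Hypothesis hlin : forall (a : R[i]) (x y z : V), ip (a *: x + y) z = a * ip x z + ip y z.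
Hypothesis hsym : forall x y : V, ip y x = (ip x y)^*.

Lemma ip0l z : ip 0 z = 0.
Proof.
have := hlin 1 0 0 z; rewrite scale1r addr0 mul1r => h.
by apply: (addrI (ip 0 z)); rewrite addr0 -h.
Qed.
Lemma ipZl a x z : ip (a *: x) z = a * ip x z.
Proof. by rewrite -[a *: x]addr0 hlin ip0l addr0. Qed.
Lemma ipDl x y z : ip (x + y) z = ip x z + ip y z.
Proof. by rewrite -[x]scale1r hlin mul1r scale1r. Qed.
Lemma ipZr a x z : ip z (a *: x) = a^* * ip z x.
Proof. by rewrite hsym ipZl rmorphM /= -hsym. Qed.

Definition aa : R[i] := (2^-1 +i* 2^-1)%C.
Lemma aaE : aa^* * aa = ((2^-1 : R)%:C)%C.
Proof. rewrite /aa /=; simpc; by congr Complex; field.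
Qed.
Lemma ReM r (w : R[i]) : 0 <= r -> complex.Re `|(r%:C)%C * w| = r * complex.Re `|w|.
Proof. move=> r0. rewrite normrM ger0_norm ?ler0c //. by case: `|w| => p q; simpc.
Qed.

Section Lin.
Variable f : V -> V.
Hypothesis hf : linear f.
Lemma lin0 : f 0 = 0.
Proof.
have := hf 1 0 0; rewrite scale1r addr0 scale1r => h.
by apply: (addrI (f 0)); rewrite addr0 -h.
Qed.
Lemma linZ a x : f (a *: x) = a *: f x.
Proof. by rewrite -[a *: x]addr0 hf lin0 addr0. Qed.
Lemma linD x y : f (x + y) = f x + f y.
Proof. by rewrite -[x]scale1r hf !scale1r. Qed.
End Lin.

Lemma half2 : ((2^-1 : R)%:C + (2^-1 : R)%:C : R[i])%C = 1.
Proof. by simpc; congr Complex; field. Qed.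

Lemma core (A P Q : V -> V) (hA : linear A) (hP : linear P) (hQ : linear Q)
  (c : R[i]) (hc : c^* * c = 1) x :
  ipAA ip A (aa *: x, (c * aa) *: x) (aa *: x, (c * aa) *: x) = ipA ip A x x /\
  ipAA ip A (blk_PQ00 P Q (aa *: x, (c * aa) *: x)) (aa *: x, (c * aa) *: x)
   = ((2^-1 : R)%:C)%C * ipA ip A (P x + c *: Q x) x.
Proof.
rewrite /ipAA /ipA /blk_PQ00 /=; split.
  rewrite !linZ // !ipZl !ipZr rmorphM /=.
  have -> : aa * (Num.conj aa * ip (A x) x) + c * aa * (Num.conj c * Num.conj aa * ip (A x) x) = (Num.conj aa * aa) * ip (A x) x + (Num.conj c * c) * (Num.conj aa * aa) * ip (A x) x by ring.
  rewrite hc mul1r aaE -mulrDl half2 mul1r //.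
rewrite (lin0 _ hA) ip0l addr0 (linZ _ hP) (linZ _ hQ) (linD _ hA) !(linZ _ hA) !ipDl !ipZl !ipZr (linD _ hA) (linZ _ hA) ipDl ipZl.

have -> : aa * (Num.conj aa * ip (A (P x)) x) + c * aa * (Num.conj aa * ip (A (Q x)) x) = (Num.conj aa * aa) * (ip (A (P x)) x + c * ip (A (Q x)) x) by ring.
by rewrite aaE.
Qed.
End Core.

Theorem theorem2p19 (R : realType) (V : lmodType R[i]) (ip : V -> V -> R[i])
  (A P Q : V -> V) :
  is_hilbert ip ->
  is_positive_op ip A ->
  (exists x, A x != 0) ->
  in_BA ip A P -> in_BA ip A Q ->
  ((2^-1)%:E * Order.max (omegaA ip A (fun x => (P x + 'i%C *: Q x)%R))
                         (omegaA ip A (fun x => (P x - 'i%C *: Q x)%R))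
     <= omegaAA ip A (blk_PQ00 P Q))%E.
Proof.
move=> [hlin hsym _ _ _] [[hA _] _] _ [[hP _] _] [[hQ _] _].
set s := omegaAA ip A (blk_PQ00 P Q).
have key : forall c : R[i], c^* * c = 1 ->
    (omegaA ip A (fun x => (P x + c *: Q x)%R) <= 2%:E * s)%E.
  move=> c hc; apply: ge_ereal_sup => _ [x /= hx <-].
  have [h1 h2] := @core _ _ _ hlin hsym _ _ _ hA hP hQ _ hc x.
  have hu : ipnorm (ipAA ip A) (aa R *: x, (c * aa R) *: x) = 1.
    by rewrite /ipnorm h1; exact: hx.
  have : ((complex.Re `|ipAA ip A (blk_PQ00 P Q (aa R *: x, (c * aa R) *: x)) (aa R *: x, (c * aa R) *: x)|)%:E <= s)%E.
    by apply: ereal_sup_ubound; exists (aa R *: x, (c * aa R) *: x).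
  rewrite h2 ReM // => hle.
  apply: le_trans (lee_wpmul2l _ hle) => //.
  by rewrite -EFinM mulrA mulfV // mul1r.
have -> : (fun x => P x - 'i%C *: Q x) = (fun x => P x + (- 'i%C) *: Q x).
  by apply: funext => y; rewrite scaleNr.
rewrite lee_pdivrMl // ge_max; apply/andP; split; apply: key.
  by simpc.
by simpc.
Qed.
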